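(* Let $X$ be a real Banach space and let $A \subset X$ be a compact set not containing the zero vector. Let $\{ f_i : 1 \le i \le m\} \subset S_{X^*}$ be a collection of weak*-exposed points of $B_{X^*}$ such that $\max\{ f_i(y) : 1 \le i \le m\} > 0$ for each $y \in A$. Then $A$ has a ball-covering consisting of $m$ balls.
   Context: $B_{X^*}$, $S_{X^*}$ are the closed unit ball and unit sphere of the dual $X^*$. Let $\Psi : X \to X^{**}$ be the canonical embedding. A point $f_0 \in B_{X^*}$ is a weak*-exposed point of $B_{X^*}$ if there is $x \in X$ with $f_0(x) = \sup\{ f(x) : f \in B_{X^*}\}$ and $\{ f \in B_{X^*} : f(x) = f_0(x)\} = \{f_0\}$ (i.e. $\Psi(x)$ exposes $f_0$). A ball-covering of a set $A \subset X$ is a collection of open balls $B(c, r) = \{ z : \|c - z\| < r\}$, none of which contains the zero vector (i.e. $0 < r \le \|c\|$), whose union contains $A$. *)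

(* Defs.v *)
From HB Require Import structures.
From mathcomp Require Import all_boot all_order all_algebra.
From mathcomp Require Import all_classical all_reals all_analysis.
Set Implicit Arguments. Unset Strict Implicit. Unset Printing Implicit Defensive.
Import Order.TTheory GRing.Theory Num.Theory.
Import numFieldNormedType.Exports.
Local Open Scope classical_set_scope.
Local Open Scope ring_scope.

Section Dual.
Variables (R : realType) (X : normedModType R).

Definition is_dual (f : X -> R) : Prop :=
  (forall (a : R) (x y : X), f (a *: x + y) = a * f x + f y) /\ continuous f.

Definition dual_norm (f : X -> R) : R :=
  sup [set `|f x| | x in [set x : X | `|x| <= 1]].

Definition dual_ball : set (X -> R) :=
  [set f | is_dual f /\ dual_norm f <= 1].
Definition dual_sphere : set (X -> R) :=
  [set f | is_dual f /\ dual_norm f = 1].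

Definition weak_star_exposed (f0 : X -> R) : Prop :=
  dual_ball f0 /\
  exists x : X,
    f0 x = sup [set f x | f in dual_ball] /\
    [set f | dual_ball f /\ f x = f0 x] = [set f0].

Definition open_ball (c : X) (r : R) : set X := [set z | `|c - z| < r].

(* A has a ball-covering consisting of m balls (indexed by 'I_m), none of
   which contains 0, i.e. 0 < r_i <= ||c_i||. *)
Definition has_ball_covering (A : set X) (m : nat) : Prop :=
  exists (c : 'I_m -> X) (r : 'I_m -> R),
    (forall i, 0 < r i <= `|c i|) /\
    A `<=` \bigcup_(i in [set: 'I_m]) open_ball (c i) (r i).

End Dual.

(* Main.v *)
Require Import Defs.
From HB Require Import structures.
From mathcomp Require Import all_boot all_order all_algebra.
From mathcomp Require Import all_classical all_reals all_analysis.
From mathcomp Require Import ring lra.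
From mathcomp Require Import finmap.
Set Implicit Arguments. Unset Strict Implicit. Unset Printing Implicit Defensive.
Import Order.TTheory GRing.Theory Num.Theory.
Import numFieldNormedType.Exports.
Local Open Scope classical_set_scope.
Local Open Scope ring_scope.

Section HahnBanach.
Variables (R : realType) (V : lmodType R).

Definition sublin (p : V -> R) :=
  (forall v w, p (v + w) <= p v + p w) /\
  (forall (a : R) v, 0 < a -> p (a *: v) <= a * p v).

Lemma sublin_hom {p} : sublin p -> forall (a : R) v, 0 < a -> p (a *: v) = a * p v.
Proof.
move=> [_ hp] a v a0; apply/eqP; rewrite eq_le hp //=.
have := hp a^-1 (a *: v) (ltac:(by rewrite invr_gt0)).
rewrite scalerA mulVf ?gt_eqF // scale1r => h.
have := ler_wpM2l (ltW a0) h.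
by rewrite mulrA mulfV ?gt_eqF // mul1r.
Qed.

Lemma sublin0 {p} : sublin p -> p 0 = 0.
Proof.
move=> sp; have h : p (2 *: 0) = 2 * p 0 by apply: sublin_hom.
by rewrite scaler0 in h; lra.
Qed.

Lemma sublin_lb {p} : sublin p -> forall v, - p (- v) <= p v.
Proof.
move=> sp v; have := sp.1 v (- v); rewrite addrN sublin0 //; lra.
Qed.

Definition coneset (phi : V -> R) (K : V -> R -> Prop) v :=
  [set r | exists u c, K u c /\ r = phi (v + u) - c].
Definition coneinf (phi : V -> R) (K : V -> R -> Prop) v := inf (coneset phi K v).

Section Cone.
Variables (phi : V -> R) (K : V -> R -> Prop).
Hypotheses (sphi : sublin phi) (K00 : K 0 0)
  (KD : forall u1 c1 u2 c2, K u1 c1 -> K u2 c2 -> K (u1 + u2) (c1 + c2))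
  (KZ : forall a u c, 0 < a -> K u c -> K (a *: u) (a * c))
  (Kb : forall u c, K u c -> c <= phi u).

Lemma coneset_lb v : lbound (coneset phi K v) (- phi (- v)).
Proof.
move=> r [u [c [Kuc ->]]].
have h1 := sphi.1 (v + u) (- v).
rewrite addrC addKr in h1.
have := Kb Kuc; lra.
Qed.

Lemma coneset_n0 v : coneset phi K v !=set0.
Proof. by exists (phi (v + 0) - 0); exists 0, 0. Qed.

Lemma coneinf_le v {u c} : K u c -> coneinf phi K v <= phi (v + u) - c.
Proof.
move=> Kuc; apply: ge_inf; first by exists (- phi (- v)); exact: coneset_lb.
by exists u, c.
Qed.

Lemma coneinf_ge v x : (forall u c, K u c -> x <= phi (v + u) - c) -> x <= coneinf phi K v.
Proof.
move=> h; apply: lb_le_inf; first exact: coneset_n0.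
by move=> r [u [c [Kuc ->]]]; exact: h.
Qed.

Lemma coneinf_lephi v : coneinf phi K v <= phi v.
Proof. by have := coneinf_le v K00; rewrite addr0 subr0. Qed.

Lemma coneinf_sublin : sublin (coneinf phi K).
Proof.
split.
- move=> v w.
  have h1 : forall u1 c1 u2 c2, K u1 c1 -> K u2 c2 ->
      coneinf phi K (v + w) <= (phi (v + u1) - c1) + (phi (w + u2) - c2).
    move=> u1 c1 u2 c2 K1 K2; have := coneinf_le (v + w) (KD K1 K2).
    have := sphi.1 (v + u1) (w + u2).
    rewrite (_ : v + u1 + (w + u2) = v + w + (u1 + u2)); last first.
      by rewrite -!addrA; congr (_ + _); rewrite addrCA.
    lra.
  have h2 : forall u2 c2, K u2 c2 ->
      coneinf phi K (v + w) - (phi (w + u2) - c2) <= coneinf phi K v.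
    move=> u2 c2 K2; apply: coneinf_ge => u1 c1 K1; have := h1 _ _ _ _ K1 K2; lra.
  have : coneinf phi K (v + w) - coneinf phi K v <= coneinf phi K w.
    apply: coneinf_ge => u2 c2 K2; have := h2 _ _ K2; lra.
  lra.
- move=> a v a0.
  have : coneinf phi K (a *: v) / a <= coneinf phi K v.
    apply: coneinf_ge => u c Kuc.
    have := coneinf_le (a *: v) (KZ a0 Kuc).
    rewrite -scalerDr (sublin_hom sphi _ a0) -mulrBr => h.
    rewrite ler_pdivrMr // mulrC; exact: h.
  by rewrite ler_pdivrMr // mulrC.
Qed.

End Cone.

Definition lin (g : V -> R) := forall (a : R) v w, g (a *: v + w) = a * g v + g w.

Lemma minimal_linear (p : V -> R) : sublin p ->
  (forall p', sublin p' -> (forall v, p' v <= p v) -> forall v, p v <= p' v) -> lin p.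
Proof.
move=> sp pmin.
have sup_add : forall v w, p v + p w <= p (v + w).
  move=> v w.
  pose K := fun u c => exists t : R, 0 <= t /\ u = t *: v /\ c = t * p v.
  have K00 : K 0 0 by exists 0; rewrite scale0r mul0r.
  have KD : forall u1 c1 u2 c2, K u1 c1 -> K u2 c2 -> K (u1 + u2) (c1 + c2).
    move=> u1 c1 u2 c2 [t1 [t10 [-> ->]]] [t2 [t20 [-> ->]]].
    exists (t1 + t2); split; first by rewrite addr_ge0.
    by rewrite scalerDl mulrDl.
  have KZ : forall a u c, 0 < a -> K u c -> K (a *: u) (a * c).
    move=> a u c a0 [t [t0 [-> ->]]]; exists (a * t).
    split; first by rewrite mulr_ge0 // ltW.
    by rewrite scalerA mulrA.
  have Kb : forall u c, K u c -> c <= p u.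
    move=> u c [t [t0 [-> ->]]]; have [->|tp] := eqVneq t 0.
      by rewrite mul0r scale0r sublin0.
    by rewrite sublin_hom // lt_def tp t0.
  have := pmin _ (coneinf_sublin sp K00 KD KZ Kb) (coneinf_lephi sp K00 Kb) w.
  have : K (1 *: v) (1 * p v) by exists 1; rewrite ler01.
  move=> /(coneinf_le sp Kb w) h1 h2; rewrite scale1r mul1r [w + v]addrC in h1; lra.
have add : forall v w, p (v + w) = p v + p w.
  by move=> v w; apply/eqP; rewrite eq_le sp.1 sup_add.
have opp : forall v, p (- v) = - p v.
  move=> v; have := add v (- v); rewrite addrN sublin0 //; lra.
move=> a v w; rewrite add; congr (_ + _).
have [a0|a0|->] := ltgtP a 0; last by rewrite scale0r mul0r sublin0.
- rewrite -(opprK a) scaleNr opp sublin_hom ?oppr_gt0 //; lra.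
- exact: sublin_hom.
Qed.

Definition subT (q : V -> R) := {p : V -> R | sublin p /\ forall v, p v <= q v}.

Lemma hahn_banach (q : V -> R) : sublin q ->
  exists g, lin g /\ forall v, g v <= q v.
Proof.
move=> sq.
pose t0 : subT q := exist _ q (conj sq (fun v => lexx (q v))).
pose Rl := fun s t : subT q => `[< forall v, sval t v <= sval s v >].
have [|||t tmax] := @ZL_preorder (subT q) t0 Rl.
- by move=> t; apply/asboolP => v.
- move=> r s t /asboolP h1 /asboolP h2; apply/asboolP => v.
  exact: le_trans (h2 v) (h1 v).
- move=> A Atot.
  pose B := A `|` [set t0].
  have Bt0 : B t0 by right.
  have Btot : forall s t, B s -> B t -> Rl s t \/ Rl t s.
    have t0top : forall s, Rl t0 s by move=> s; apply/asboolP => v; exact: (proj2 (svalP s)).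
    move=> s t [As|->] [At|->]; [exact: Atot| right| left|left]; exact: t0top.
  pose Es v := [set sval s v | s in B].
  pose m v := inf (Es v).
  have Es_lb : forall v, lbound (Es v) (- q (- v)).
    move=> v _ [s _ <-]; have [ss sq'] := svalP s.
    apply: le_trans (sublin_lb ss v); rewrite lerN2; exact: sq'.
  have Es_hlb : forall v, has_lbound (Es v) by move=> v; exists (- q (- v)); exact: Es_lb.
  have Es_n0 : forall v, Es v !=set0 by move=> v; exists (q v); exists t0.
  have m_le : forall s v, B s -> m v <= sval s v.
    move=> s v Bs; have := ge_inf (Es_hlb v); apply; by exists s.
  have m_ge : forall v x, (forall s, B s -> x <= sval s v) -> x <= m v.
    by move=> v x h; apply: lb_le_inf (Es_n0 v) _ => _ [s Bs <-]; exact: h.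
  have sm : sublin m.
    split.
    - move=> v w.
      have h1 : forall s1 s2, B s1 -> B s2 -> m (v+w) <= sval s1 v + sval s2 w.
        move=> s1 s2 B1 B2; have [ss1 _] := svalP s1; have [ss2 _] := svalP s2.
        case: (Btot _ _ B1 B2) => /asboolP h.
        + apply: le_trans (m_le _ _ B2) _; apply: le_trans (ss2.1 v w) _; have := h v; lra.
        + apply: le_trans (m_le _ _ B1) _; apply: le_trans (ss1.1 v w) _; have := h w; lra.
      have h2 : forall s2, B s2 -> m (v+w) - sval s2 w <= m v.
        move=> s2 B2; apply: m_ge => s1 B1; have := h1 _ _ B1 B2; lra.
      have : m (v+w) - m v <= m w by apply: m_ge => s2 B2; have := h2 _ B2; lra.
      lra.
    - move=> a v a0.
      have : m (a *: v) / a <= m v.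
        apply: m_ge => s Bs; rewrite ler_pdivrMr // mulrC.
        apply: le_trans (m_le _ _ Bs) _; exact: (proj1 (svalP s)).2.
      by rewrite ler_pdivrMr // mulrC.
  have mq : forall v, m v <= q v by move=> v; exact: (m_le t0 v Bt0).
  exists (exist _ m (conj sm mq)) => s As; apply/asboolP => v /=.
  exact: m_le _ _ (or_introl As).
exists (sval t); split; last exact: (proj2 (svalP t)).
apply: minimal_linear; first exact: (proj1 (svalP t)).
move=> p' sp' hp'.
have hp'q : forall v, p' v <= q v by move=> v; exact: le_trans (hp' v) (proj2 (svalP t) v).
have /asboolP := tmax (exist _ p' (conj sp' hp'q)) (asboolT hp').
by [].
Qed.
End HahnBanach.
Section Normed.
Variables (R : realType) (X : normedModType R).

Lemma norm_sublin : sublin (fun v : X => `|v|).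
Proof.
split; first by move=> v w; exact: ler_normD.
by move=> a v a0; rewrite normrZ gtr0_norm.
Qed.

Lemma lin_dual (h : X -> R) : is_dual h -> lin h.
Proof. by case. Qed.

Lemma lin0 (h : X -> R) : lin h -> h 0 = 0.
Proof. move=> hl; have := hl 1 0 0; rewrite scale1r addr0 mul1r; lra. Qed.

Lemma linZ (h : X -> R) : lin h -> forall a v, h (a *: v) = a * h v.
Proof. by move=> hl a v; have := hl a v 0; rewrite addr0 lin0 // addr0. Qed.

Lemma linB (h : X -> R) : lin h -> forall v w, h (v - w) = h v - h w.
Proof.
move=> hl v w; have := hl (-1) w v; rewrite scaleN1r addrC => ->; lra.
Qed.

Lemma dual_bound (h : X -> R) : dual_ball h -> forall v, `|h v| <= `|v|.
Proof.
move=> [[hl hc] hn] v.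
have h00 := lin0 hl.
have : \forall t \near (0 : X), `|h 0 - h t| < 1.
  by move: (hc 0) => /cvgrPdist_lt; apply.
move=> /nbhs_normP [d /= d0 hd].
have d2 : 0 <= d / 2 by rewrite divr_ge0 // ltW.
have bnd : forall w : X, `|w| <= 1 -> `|h w| <= 2 / d.
  move=> w w1.
  have : `|0 - d / 2 *: w| < d.
    rewrite sub0r normrN normrZ ger0_norm //.
    have : d / 2 * `|w| <= d / 2 * 1 by rewrite ler_pM2l ?divr_gt0.
    lra.
  move=> /hd /=; rewrite h00 sub0r normrN linZ // normrM ger0_norm // => hw.
  rewrite ler_pdivlMr // mulrC; lra.
have ub : forall w : X, `|w| <= 1 -> `|h w| <= 1.
  move=> w w1; apply: le_trans hn; apply: ub_le_sup; last by exists w.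
  by exists (2 / d) => _ [w' w'1 <-]; exact: bnd.
have [->|v0] := eqVneq v 0.
  by rewrite h00 (normr0 X) normr_le0.
have nv : 0 < `|v| by rewrite normr_gt0.
have : `|h (`|v|^-1 *: v)| <= 1.
  by apply: ub; rewrite normrZ normrV ?unitfE ?normr_eq0 // normr_id mulVf ?gt_eqF.
rewrite linZ // normrM normrV ?unitfE ?normr_eq0 // normr_id.
by rewrite -ler_pdivlMl ?invr_gt0 // invrK mulr1.
Qed.

Lemma dual_normP (h : X -> R) c : (forall v : X, `|v| <= 1 -> `|h v| <= c) -> dual_norm h <= c.
Proof.
move=> hc; apply: ge_sup; first by exists (`|h 0|); exists 0 => //=; rewrite (normr0 X) ler01.
by move=> _ [v v1 <-]; exact: hc.
Qed.

Lemma bound_dual (h : X -> R) : lin h -> (forall v, `|h v| <= `|v|) -> dual_ball h.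
Proof.
move=> hl hb; split; last by apply: dual_normP => v v1; exact: le_trans (hb v) v1.
split => //.
move=> x; apply/cvgrPdist_lt => e e0.
apply/nbhs_normP; exists e => //= t xt.
by rewrite -linB //; exact: le_lt_trans (hb _) xt.
Qed.

End Normed.
Section Main.
Variables (R : realType) (X : normedModType R).

Lemma linN (h : X -> R) : lin h -> forall v, h (- v) = - h v.
Proof. by move=> hl v; rewrite -sub0r linB // lin0 // sub0r. Qed.

Lemma exposed_dir (f : X -> R) (x z : X) :
  f x = sup [set g x | g in @dual_ball R X] ->
  [set g | dual_ball g /\ g x = f x] = [set f] ->
  0 < f z -> exists T, 0 < T /\ `|T *: x - z| < T * `|x|.
Proof.
move=> fx fexp fz.
apply: contrapT => H.
have H1 : forall T, 0 < T -> T * `|x| <= `|T *: x - z|.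
  move=> T T0; rewrite leNgt; apply/negP => hl; apply: H; by exists T.
have H2 : forall t s, 0 <= t -> 0 <= s -> t * `|x| <= `|t *: x - s *: z|.
  move=> t s t0 s0.
  have [->|sp] := eqVneq s 0.
    by rewrite scale0r subr0 normrZ ger0_norm.
  have s0' : 0 < s by rewrite lt_def sp s0.
  have -> : t *: x - s *: z = s *: ((t / s) *: x - z).
    by rewrite scalerBr scalerA mulrCA mulfV // mulr1.
  rewrite normrZ gtr0_norm //.
  have [->|tp] := eqVneq t 0; first by rewrite mul0r mulr_ge0.
  have t0' : 0 < t by rewrite lt_def tp t0.
  have := ler_wpM2l (ltW s0') (H1 (t / s) (divr_gt0 t0' s0')).
  by rewrite mulrA mulrCA mulfV // mulr1.
pose K := fun (u : X) (c : R) => exists t s, [/\ 0 <= t, 0 <= s, u = t *: x - s *: z & c = t * `|x|].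
have K00 : K 0 0 by exists 0, 0; split => //; rewrite ?scale0r ?subr0 ?mul0r.
have KD : forall u1 c1 u2 c2, K u1 c1 -> K u2 c2 -> K (u1 + u2) (c1 + c2).
  move=> u1 c1 u2 c2 [t1 [s1 [t10 s10 -> ->]]] [t2 [s2 [t20 s20 -> ->]]].
  exists (t1 + t2), (s1 + s2); split; rewrite ?addr_ge0 //.
    by rewrite !scalerDl opprD addrACA.
  by rewrite mulrDl.
have KZ : forall a u c, 0 < a -> K u c -> K (a *: u) (a * c).
  move=> a u c a0 [t [s [t0 s0 -> ->]]].
  exists (a * t), (a * s); split; rewrite ?mulr_ge0 //; try exact: ltW.
    by rewrite scalerBr !scalerA.
  by rewrite mulrA.
have Kb : forall u c, K u c -> c <= `|u|.
  by move=> u c [t [s [t0 s0 -> ->]]]; exact: H2.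
have sP := coneinf_sublin (@norm_sublin R X) K00 KD KZ Kb.
have [g [gl gP]] := hahn_banach sP.
have gn : forall v, g v <= `|v|.
  by move=> v; exact: le_trans (gP v) (coneinf_lephi (@norm_sublin R X) K00 Kb v).
have gb : forall v, `|g v| <= `|v|.
  move=> v; rewrite ler_norml gn andbT.
  have := gn (- v); rewrite normrN linN //; lra.
have gd : dual_ball g := bound_dual gl gb.
have Kx : K x `|x|.
  by exists 1, 0; split; rewrite ?ler01 ?lexx // ?scale1r ?scale0r ?subr0 ?mul1r.
have gx1 : `|x| <= g x.
  have := gP (- x); have := coneinf_le (@norm_sublin R X) Kb (- x) Kx.
  rewrite /= addNr (normr0 X) (linN gl); lra.
have Kz : K (- z) 0.
  by exists 0, 1; split; rewrite ?ler01 ?lexx // ?scale0r ?scale1r ?sub0r ?mul0r.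
have gz : g z <= 0.
  have := coneinf_le (@norm_sublin R X) Kb z Kz; rewrite /= addrN (normr0 X) subr0.
  have := gP z; lra.
have gx : g x = `|x|.
  apply/eqP; rewrite eq_le gx1 andbT; exact: le_trans (ler_norm _) (gb x).
have fxx : f x = `|x|.
  rewrite fx; apply/eqP; rewrite eq_le; apply/andP; split.
  - apply: ge_sup; first by exists (g x), g.
    by move=> _ [h hd <-]; exact: le_trans (ler_norm _) (dual_bound hd x).
  - rewrite -gx; apply: ub_le_sup; last by exists g.
    by exists `|x| => _ [h hd <-]; exact: le_trans (ler_norm _) (dual_bound hd x).
have : [set g0 | dual_ball g0 /\ g0 x = f x] g by split => //; rewrite gx fxx.
rewrite fexp => /= gf; rewrite gf in gz; lra.
Qed.

Lemma exposed_nz (f : X -> R) x : dual_sphere f ->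
  [set g | dual_ball g /\ g x = f x] = [set f] -> x != 0.
Proof.
move=> [[fl _] f1] fexp; apply/negP => /eqP x0.
have h0d : dual_ball (fun _ : X => 0 : R).
  apply: bound_dual; first by move=> a v w; rewrite mulr0 addr0.
  by move=> v; rewrite normr0 normr_ge0.
have : [set g | dual_ball g /\ g x = f x] (fun _ => 0 : R).
  by split => //; rewrite x0 lin0.
rewrite fexp => /= h0f.
have : dual_norm (fun _ : X => 0 : R) <= 0 by apply: dual_normP => v _; rewrite normr0.
rewrite h0f f1; lra.
Qed.

Lemma ball_mono (x y : X) (t T : R) : 0 < t -> t <= T ->
  `|t *: x - y| < t * `|x| -> `|T *: x - y| < T * `|x|.
Proof.
move=> t0 tT h.
have -> : T *: x - y = (t *: x - y) + (T - t) *: x.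
  by rewrite scalerBl [RHS]addrC addrA subrK.
apply: le_lt_trans (ler_normD _ _) _.
rewrite normrZ ger0_norm ?subr_ge0 //.
have : 0 <= `|x| := normr_ge0 x.
nra.
Qed.

End Main.

Theorem mainTheorem5 (R : realType) (X : completeNormedModType R)
  (A : set X) (m : nat) (f : 'I_m -> X -> R) :
  compact A -> ~ A 0 ->
  (forall i, dual_sphere (f i) /\ weak_star_exposed (f i)) ->
  (forall y, A y -> exists i, 0 < f i y) ->
  has_ball_covering A m.
Proof.
move=> cA nA0 hf hpos.
have /choice [xs hxs] : forall i, exists x : X, [/\ x != 0,
    f i x = sup [set g x | g in @dual_ball R X] &
    [set g | dual_ball g /\ g x = f i x] = [set f i]].
  move=> i; have [hs [_ [x [fx fexp]]]] := hf i.
  by exists x; split => //; exact: exposed_nz hs fexp.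
have xn : forall i, 0 < `|xs i| by move=> i; rewrite normr_gt0; case: (hxs i).
pose D := [set p : 'I_m * R | 0 < p.2].
pose F := fun p : 'I_m * R => ball (p.2 *: xs p.1) (p.2 * `|xs p.1|).
have FE : forall p w, F p w <-> `|p.2 *: xs p.1 - w| < p.2 * `|xs p.1|.
  by move=> p w; rewrite /F -ball_normE.
have Fopen : forall p, D p -> open (F p) by move=> p _; exact: ball_open.
have Acov : A `<=` cover D F.
  move=> y Ay; have [i fiy] := hpos y Ay.
  have [xn0 fx fexp] := hxs i.
  have [T [T0 hT]] := exposed_dir fx fexp fiy.
  by exists (i, T) => //; apply/FE.
rewrite compact_cover in cA.
have [D' D'D cov] := cA _ D F Fopen Acov.
pose T := 1 + \sum_(p <- finmap.enum_fset D') `|p.2|.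
have Tge : forall p : 'I_m * R, p \in D' -> p.2 <= T.
  move=> p pD; rewrite /T (big_rem p) //=.
  have := ler_norm p.2; have : 0 <= \sum_(q <- rem p (finmap.enum_fset D')) `|q.2|.
    by apply: sumr_ge0 => q _.
  lra.
have T0 : 0 < T.
  have : 0 <= \sum_(q <- finmap.enum_fset D') `|q.2| by apply: sumr_ge0.
  rewrite /T; lra.
exists (fun i => T *: xs i), (fun i => T * `|xs i|); split.
  move=> i; rewrite mulr_gt0 //= normrZ gtr0_norm //.
move=> y /cov [p pD' /FE hp].
have p0 : 0 < p.2 by have := D'D p pD'; rewrite in_setE.
exists p.1 => //; rewrite /open_ball /=.
exact: ball_mono p0 (Tge _ pD') hp.
Qed.
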